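(* Let $G$ be a graph and $e=\{u,v\}\notin G$ an edge between vertices of $G$. Let $K=K(G)$ and $K'=K(G\cup\{e\})$ be the clique complexes, and for each $j$ let $i_j:\mathrm{H}_j(K\cap\mathrm{st}_{K'}(e))\to\mathrm{H}_j(K)$ be the map induced by inclusion (reduced homology over a field). Define $F_k^+(e)=\mathrm{rk}(\ker i_{k-1})$ and $F_k^-(e)=\mathrm{rk}(\mathrm{im}\, i_{k-1})$. Then \[ \beta_k(K')=\beta_k(K)+F_k^+(e)-F_{k+1}^-(e)\quad(k>0),\qquad \beta_0(K')=\beta_0(K)-F_1^-(e), \] and \[ F_k^+(e)+F_k^-(e)=\beta_{k-2}(\mathrm{lk}_{K'}(e))\quad(k>1),\qquad F_1^+(e)+F_1^-(e)=\mathbf{1}\{\mathrm{lk}_{K'}(e)=\emptyset\}. \]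
   Context: The clique complex $K(G)$ of a graph $G$ is the maximal simplicial complex whose 1-skeleton is $G$. For a simplex $\sigma$ of a complex $K$, the closed star $\mathrm{st}_K(\sigma)$ is the smallest subcomplex containing all simplices $\tau\supseteq\sigma$, and the link is $\mathrm{lk}_K(\sigma)=\{\tau\in\mathrm{st}_K(\sigma):\sigma\cap\tau=\emptyset\}$. $\beta_k$ denotes the reduced Betti number (rank of reduced homology over the field). *)

(* Defs.v *)
From mathcomp Require Import all_boot all_order all_algebra.
Set Implicit Arguments. Unset Strict Implicit. Unset Printing Implicit Defensive.
Import GRing.Theory.
Local Open Scope ring_scope.

Section Complexes.
Variable T : finType.

(** A simplicial complex is represented by its set of faces
    ({set {set T}}), which (for reduced homology) contains the empty face. *)

Definition clique_complex (adj : rel T) : {set {set T}} :=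
  [set s : {set T} | [forall x in s, forall y in s, (x != y) ==> adj x y]].

Definition add_edge (adj : rel T) (u v : T) : rel T :=
  fun x y => [|| adj x y, (x == u) && (y == v) | (x == v) && (y == u)].

Definition star (K : {set {set T}}) (s : {set T}) : {set {set T}} :=
  [set t : {set T} | [exists r in K, (s \subset r) && (t \subset r)]].

Definition link (K : {set {set T}}) (s : {set T}) : {set {set T}} :=
  [set t in star K s | [disjoint s & t]].

End Complexes.

Section Homology.
Variables (F : fieldType) (T : finType).

Definition NS := #|{: {set T}}|.
Definition fc (i : 'I_NS) : {set T} := enum_val i.

(** Orientation sign of the face obtained by deleting v from s
    (vertices ordered by enum_rank). *)
Definition osign (s : {set T}) (v : T) : F :=
  (-1) ^+ #|[set w in s | (enum_rank w < enum_rank v)%N]|.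

(** Global (augmented) boundary matrix on all subsets of T, acting on row
    vectors: chain c |-> c *m bd. *)
Definition bd : 'M[F]_NS :=
  \matrix_(i, j) \sum_(v in fc i) (fc j == fc i :\ v)%:R * osign (fc i) v.

(** The space of chains of K supported on faces of cardinality n
    (i.e. dimension n-1; n = 0 is the empty face, augmentation). *)
Definition chains (K : {set {set T}}) (n : nat) : 'M[F]_NS :=
  \matrix_(i, j) ((i == j) && (fc i \in K) && (#|fc i| == n))%:R.

Definition cyc (K : {set {set T}}) (n : nat) := (chains K n :&: kermx bd)%MS.
Definition bnd (K : {set {set T}}) (n : nat) := (chains K n.+1 *m bd)%MS.

Definition rbetti (K : {set {set T}}) (d : nat) : nat :=
  (\rank (cyc K d.+1) - \rank (bnd K d.+1))%N.

(** For L a subcomplex of K, the map i : H_{k-1}(L) -> H_{k-1}(K) induced by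
    inclusion, H = Z/B.  ker i = (Z(L) :&: B(K)) / B(L),
    im i = (Z(L) + B(K)) / B(K).  Fplus = rk ker i_{k-1}, Fminus = rk im i_{k-1}
    (k >= 1; faces of dimension k-1 have cardinality k). *)
Definition Fplus (L K : {set {set T}}) (k : nat) : nat :=
  (\rank (cyc L k :&: bnd K k)%MS - \rank (bnd L k))%N.
Definition Fminus (L K : {set {set T}}) (k : nat) : nat :=
  (\rank (cyc L k + bnd K k)%MS - \rank (bnd K k))%N.

End Homology.

(* Main.v *)
Require Import Defs.
From mathcomp Require Import all_boot all_order all_algebra.
Set Implicit Arguments. Unset Strict Implicit. Unset Printing Implicit Defensive.
Import GRing.Theory.
Local Open Scope ring_scope.
From mathcomp Require Import ring zify.

Section S.
Variables (F : fieldType) (T : finType).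
Local Notation osign := (@osign F T).
Local Notation fc := (@fc T).
Local Notation NS := (@NS T).
Local Notation bd := (@bd F T).

Definition rk (x : T) : nat := enum_rank x.

Lemma osign_D1 (s : {set T}) x y : x \in s ->
  osign (s :\ x) y = osign s y * (-1) ^+ (rk x < rk y)%N.
Proof.
move=> xs; rewrite /osign -exprD -[LHS]signr_odd -[RHS]signr_odd; congr ((-1) ^+ _).
rewrite [in RHS](cardsD1 x) !inE xs /=.
have -> : [set w in s :\ x | (enum_rank w < enum_rank y)%N] =
          [set w in s | (enum_rank w < enum_rank y)%N] :\ x.
  by apply/setP => w; rewrite !inE andbA.
by rewrite /rk !oddD; case: (_ < _)%N => /=; rewrite ?addbb ?addbF ?addbT ?negbK.
Qed.

Lemma osign_sq (s : {set T}) y : osign s y * osign s y = 1.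
Proof. by rewrite /osign -exprD -signr_odd oddD addbb. Qed.

Lemma sum_fc (g : {set T} -> F) : \sum_(k < NS) g (fc k) = \sum_t g t.
Proof.
have := big_enum_val (A := [pred x : {set T} | true]) g.
rewrite /fc /NS /=. move=> <-. by apply: eq_bigl.
Qed.

Lemma fc_inj : injective fc.
Proof. exact: enum_val_inj. Qed.

Lemma pick_sum (g : {set T} -> F) a : \sum_t (t == a)%:R * g t = g a.
Proof.
rewrite (bigD1 a) //= eqxx mul1r big1 ?addr0 // => t /negbTE ->; by rewrite mul0r.
Qed.


Definition bdf (s t : {set T}) : F := \sum_(v in s) (t == s :\ v)%:R * osign s v.

Lemma bdE i j : bd i j = bdf (fc i) (fc j).
Proof. by rewrite mxE. Qed.

Lemma bdf_mull (g : {set T} -> F) s :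
  \sum_t bdf s t * g t = \sum_(x in s) osign s x * g (s :\ x).
Proof.
rewrite /bdf; under eq_bigr do rewrite big_distrl /=.
rewrite exchange_big /=; apply: eq_bigr => x _.
rewrite -(pick_sum (fun t => osign s x * g t)); apply: eq_bigr => t _.
by rewrite mulrA mulrAC.
Qed.

Lemma rk_inj : injective rk.
Proof. by move=> x y /val_inj /enum_rank_inj. Qed.

Lemma bd2 : bd *m bd = 0.
Proof.
apply/matrixP => i j; rewrite !mxE.
under eq_bigr do rewrite !bdE.
rewrite (sum_fc (fun t => bdf (fc i) t * bdf t (fc j))) bdf_mull.
set s := fc i; set r := fc j.
pose g x y := (r == s :\ x :\ y)%:R * osign s x * osign s y.
have gC x y : g x y = g y x.
  by rewrite /g setDDl setUC -setDDl mulrAC.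
pose d x y := if [&& x \in s, y \in s & (rk y < rk x)%N] then g x y else 0.
transitivity (\sum_x \sum_y (d x y - d y x)); last first.
  under [LHS]eq_bigr do rewrite sumrB.
  by rewrite sumrB [X in _ - X]exchange_big subrr.
rewrite [LHS]big_mkcond /=; apply: eq_bigr => x _.
case: ifP => xs; last first.
  by rewrite big1 // => y _; rewrite /d xs andbF subrr.
rewrite /bdf big_distrr /= big_mkcond /=; apply: eq_bigr => y _.
rewrite !inE; case: (eqVneq y x) => [->|yx] /=.
  by rewrite /d; case: (x \in s); rewrite /= ?ltnn ?andbF subrr.
case: ifP => ys; last by rewrite /d ys !andbF subrr.
rewrite osign_D1 // /d xs ys /=.
case: (ltngtP (rk x) (rk y)) => [lt|gt|eq].
- rewrite gC /g expr1 /=; ring.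
- rewrite /g expr0 /=; ring.
- by move: yx; rewrite (rk_inj eq) eqxx.
Qed.

Definition Hf (w : T) (s t : {set T}) : F :=
  ((w \notin s) && (t == w |: s))%:R * osign t w.
Definition Hm (w : T) : 'M[F]_NS := \matrix_(i, j) Hf w (fc i) (fc j).

Lemma Hf_mull w (g : {set T} -> F) s :
  \sum_t Hf w s t * g t = (w \notin s)%:R * osign (w |: s) w * g (w |: s).
Proof.
rewrite -(pick_sum (fun t => (w \notin s)%:R * osign t w * g t)).
apply: eq_bigr => t _; rewrite /Hf -mulnb natrM -!mulrA; case: eqP => [->|] /=.
  by rewrite !mul1r. by rewrite !mul0r mulr0.
Qed.

Lemma fc_eq i j : (fc i == fc j) = (i == j).
Proof. exact: (inj_eq fc_inj). Qed.

Lemma cone_id w : Hm w *m bd + bd *m Hm w = 1%:M.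
Proof.
apply/matrixP => i j; rewrite !mxE -fc_eq.
under eq_bigr do rewrite bdE mxE.
under [X in _ + X]eq_bigr do rewrite bdE mxE.
rewrite (sum_fc (fun t => Hf w (fc i) t * bdf t (fc j))).
rewrite (sum_fc (fun t => bdf (fc i) t * Hf w t (fc j))).
rewrite Hf_mull bdf_mull; set s := fc i; set r := fc j.
have [ws|ws] := boolP (w \in s).
  rewrite /= mul0r mul0r add0r (bigD1 w) //= big1 ?addr0; last first.
    move=> x /andP[xs xw]; rewrite /Hf !inE eq_sym xw ws /= mul0r mulr0 //.
  rewrite /Hf !inE eqxx /= setD1K //.
  case: (eqVneq r s) => [E|rs]; first by rewrite E mul1r osign_sq.
  by rewrite mul0r mulr0.
rewrite /= mul1r /bdf (bigD1 w) ?setU11 //= setU1K // mulrDr.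
rewrite mulrCA osign_sq mulr1 eq_sym -addrA addrC -[RHS]add0r; congr (_ + _).
rewrite big_distrr /=.
rewrite (eq_bigl (fun x => x \in s)); last first.
  by move=> x; rewrite !inE; case: (eqVneq x w) => [->|] /=; rewrite ?(negbTE ws) ?andbT ?andbF.
rewrite -big_split /=. apply: big1 => x xs; rewrite /Hf.
have xw : x != w by apply: contraNneq ws => <-.
have wsx : w \notin s :\ x by rewrite !inE negb_and ws orbT.
have E : (w |: s) :\ x = w |: (s :\ x).
  apply/setP => y; rewrite !inE; case: (eqVneq y x) => [->|] /=; rewrite ?(negbTE xw) ?andbT /= ?andbF /= ?orbF /= //.
rewrite wsx E /=; case: (eqVneq r (w |: (s :\ x))) => [->|_]; last by rewrite (_ : false%:R = 0 :> F) // !mul0r !mulr0 addr0.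
rewrite (_ : true%:R = 1 :> F) // !mul1r.
have xs' : x \in w |: s by rewrite !inE xs orbT.
have ws' : w \in w |: s by rewrite setU11.
rewrite -E (osign_D1 _ xs') -[in osign s x](setU1K ws) (osign_D1 _ ws').
case: (ltngtP (rk x) (rk w)) => [lt|gt|eq].
- rewrite /= expr1 expr0; ring.
- rewrite /= expr1 expr0; ring.
- by move: xw; rewrite (rk_inj eq) eqxx.
Qed.

Definition dg (P : pred 'I_NS) : 'M[F]_NS := \matrix_(i, j) ((i == j) && P i)%:R.

Lemma chainsE (K : {set {set T}}) n :
  chains F K n = dg (fun i => (fc i \in K) && (#|fc i| == n)).
Proof. by apply/matrixP => i j; rewrite !mxE andbA. Qed.

Lemma dg_mulE m (P : pred 'I_NS) (M : 'M[F]_(NS, m)) i j :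
  (dg P *m M) i j = (P i)%:R * M i j.
Proof.
rewrite !mxE (bigD1 i) //= big1 ?addr0; first by rewrite !mxE eqxx.
by move=> k /negbTE ki; rewrite !mxE eq_sym ki mul0r.
Qed.

Lemma mul_dgE m (P : pred 'I_NS) (M : 'M[F]_(m, NS)) i j :
  (M *m dg P) i j = M i j * (P j)%:R.
Proof.
rewrite !mxE (bigD1 j) //= big1 ?addr0; first by rewrite !mxE eqxx.
by move=> k /negbTE kj; rewrite !mxE kj mulr0.
Qed.

Lemma supp_sub m (P : pred 'I_NS) (M : 'M[F]_(m, NS)) :
  (forall i j, ~~ P j -> M i j = 0) -> (M <= dg P)%MS.
Proof.
move=> H; have -> : M = M *m dg P.
  apply/matrixP => i j; rewrite mul_dgE.
  by case: (boolP (P j)) => Pj; rewrite ?mulr1 // H // mul0r.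
exact: submxMl.
Qed.

Lemma sub_supp m (P : pred 'I_NS) (M : 'M[F]_(m, NS)) :
  (M <= dg P)%MS -> forall i j, ~~ P j -> M i j = 0.
Proof.
by case/submxP => D -> i j /negbTE Pj; rewrite mul_dgE Pj mulr0.
Qed.

Definition dc (X : {set {set T}}) := forall s t : {set T}, s \in X -> t \subset s -> t \in X.
Definition Pc (X : {set {set T}}) n := fun i => (fc i \in X) && (#|fc i| == n).

Lemma bnd_sub_ch (X : {set {set T}}) n : dc X -> (bnd F X n <= chains F X n)%MS.
Proof.
move=> dX; rewrite /bnd !chainsE; apply: supp_sub => i j Pj.
rewrite dg_mulE bdE; case: (boolP ((fc i \in X) && (#|fc i| == n.+1))) => /= Pi;
  last by rewrite mul0r.
rewrite (_ : bdf _ _ = 0) ?mulr0 //; apply: big1 => x xi.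
case: eqP => [E|]; last by rewrite mul0r.
case/andP: Pi => Xi /eqP ci; move: Pj; rewrite E.
rewrite (dX _ _ Xi (subsetDl _ _)) /=.
by move: ci; rewrite (cardsD1 x) xi add1n => -[->]; rewrite eqxx.
Qed.

Lemma bnd_sub_ker (X : {set {set T}}) n : (bnd F X n <= kermx bd)%MS.
Proof. by apply/sub_kermxP; rewrite /bnd -mulmxA bd2 mulmx0. Qed.

Lemma bnd_sub_cyc (X : {set {set T}}) n : dc X -> (bnd F X n <= cyc F X n)%MS.
Proof. by move=> dX; rewrite sub_capmx bnd_sub_ch // bnd_sub_ker. Qed.

Lemma cone_cyc (X : {set {set T}}) n w :
  (forall s : {set T}, s \in X -> #|s| = n -> w \notin s -> w |: s \in X) ->
  (cyc F X n <= bnd F X n)%MS.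
Proof.
move=> cX; set Z := cyc F X n.
have Zb : Z *m bd = 0 by apply/sub_kermxP; exact: capmxSr.
have -> : Z = (Z *m Hm w) *m bd.
  by rewrite -[LHS]mulmx1 -(cone_id w) mulmxDr !mulmxA Zb mul0mx addr0.
apply: submxMr; apply: submx_trans (submxMr _ (capmxSl _ _)) _.
rewrite !chainsE; apply: supp_sub => i j Pj; rewrite dg_mulE mxE /Hf.
case: (boolP ((fc i \in X) && (#|fc i| == n))) => /= Pi; last by rewrite mul0r.
case/andP: Pi => Xi /eqP ci.
case: (boolP (w \in fc i)) => wi /=; first by rewrite !mul0r mulr0.
case: eqP => E; last by rewrite mul0r mulr0.
move: Pj; rewrite E cX //= cardsU1 wi ci eqxx.
done.
Qed.

Lemma chS (X Y : {set {set T}}) n : X \subset Y -> (chains F X n <= chains F Y n)%MS.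
Proof.
move=> sXY; rewrite !chainsE; apply: supp_sub => i j Pj.
rewrite mxE; case: (eqVneq i j) => [E|] //=; rewrite -E in Pj.
case: (boolP (fc i \in X)) => //= Xi.
by move: Pj; rewrite (subsetP sXY _ Xi) /= => /negbTE ->.
Qed.

Lemma chI (X Y : {set {set T}}) n : (chains F (X :&: Y) n == chains F X n :&: chains F Y n)%MS.
Proof.
apply/andP; split.
  by rewrite sub_capmx !chS // ?subsetIl ?subsetIr.
rewrite [X in (_ <= X)%MS]chainsE; apply: supp_sub => i j Pj.
have h1 := capmxSl (chains F X n) (chains F Y n).
have h2 := capmxSr (chains F X n) (chains F Y n).
rewrite [X in (_ <= X)%MS]chainsE in h1; rewrite [X in (_ <= X)%MS]chainsE in h2.
move: (sub_supp h1) (sub_supp h2) => {h1 h2} h1 h2.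
move: Pj; rewrite inE.
case: (boolP (fc j \in X)) => /= Xj; last by move=> _; apply: h1 => //=; rewrite (negbTE Xj).
case: (boolP (fc j \in Y)) => /= Yj; last by move=> _; apply: h2 => //=; rewrite (negbTE Yj).
move=> cj; apply: h1; by rewrite /= Xj.
Qed.


Lemma chU (X Y : {set {set T}}) n : (chains F (X :|: Y) n == chains F X n + chains F Y n)%MS.
Proof.
apply/andP; split; last by rewrite addsmx_sub !chS // ?subsetUl ?subsetUr.
have -> : chains F (X :|: Y) n = chains F X n +
   dg (fun i => (fc i \notin X) && (fc i \in Y) && (#|fc i| == n)).
  apply/matrixP => i j; rewrite !mxE inE.
  case: (i == j); case: (fc i \in X); case: (fc i \in Y); case: (#|fc i| == n);
  by rewrite /= ?addr0 ?add0r.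
apply: addmx_sub_adds => //; rewrite chainsE; apply: supp_sub => i j Pj.
rewrite mxE; case: (eqVneq i j) => [E|] //=; rewrite -E in Pj.
by move: Pj; rewrite negb_and => /orP[] /negbTE ->; rewrite ?andbF ?andbT.
Qed.

Definition cc (X : {set {set T}}) n := \rank (chains F X n).
Definition zz (X : {set {set T}}) n := \rank (cyc F X n).
Definition bb (X : {set {set T}}) n := \rank (bnd F X n).

Lemma RN (X : {set {set T}}) n : cc X n.+1 = (bb X n + zz X n.+1)%N.
Proof. by rewrite /cc /bb /zz /bnd /cyc mxrank_mul_ker. Qed.

Lemma cU (X Y : {set {set T}}) n : (cc (X :|: Y) n + cc (X :&: Y) n = cc X n + cc Y n)%N.
Proof.
by rewrite /cc (eqmx_rank (chU X Y n)) (eqmx_rank (chI X Y n)) mxrank_sum_cap.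
Qed.

Lemma bU (X Y : {set {set T}}) n :
  (bb (X :|: Y) n + \rank (bnd F X n :&: bnd F Y n) = bb X n + bb Y n)%N.
Proof.
have /eqmxP e := chU X Y n.+1.
rewrite /bb /bnd -[RHS]mxrank_sum_cap; congr (_ + _)%N.
have e2 := eqmxMr bd e.
have e3 := addsmxMr (chains F X n.+1) (chains F Y n.+1) bd.
apply/eqmx_rank/eqmxP; exact: (eqmx_trans e2 e3).
Qed.

Lemma zU (X Y : {set {set T}}) n :
  (zz (X :|: Y) n.+1 + cc (X :&: Y) n.+1 =
   zz X n.+1 + zz Y n.+1 + \rank (bnd F X n :&: bnd F Y n))%N.
Proof.
have h1 := RN (X :|: Y) n; have h2 := RN X n; have h3 := RN Y n.
have h4 := cU X Y n.+1; have h5 := bU X Y n.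
lia.
Qed.

Definition cone (X : {set {set T}}) := exists w, forall s : {set T},
  s \in X -> w \notin s -> w |: s \in X.

Lemma cone_zb (X : {set {set T}}) n : dc X -> cone X -> zz X n = bb X n.
Proof.
move=> dX [w cX]; apply/eqmx_rank/andP; split; last exact: bnd_sub_cyc.
by apply: (cone_cyc (w := w)) => s sX _; exact: cX.
Qed.

Lemma I1 (X Y : {set {set T}}) m : dc X -> dc Y -> cone Y ->
  \rank (bnd F X m :&: bnd F Y m) = \rank (cyc F (X :&: Y) m :&: bnd F X m).
Proof.
move=> dX dY [w cY]; have /eqmxP e := chI X Y m.
apply/eqmx_rank/andP; split.
  rewrite sub_capmx capmxSl andbT /cyc sub_capmx e !sub_capmx -!andbA.
  rewrite (submx_trans (capmxSl _ _) (bnd_sub_ch _ dX)).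
  rewrite (submx_trans (capmxSr _ _) (bnd_sub_ch _ dY)).
  by rewrite (submx_trans (capmxSr _ _) (bnd_sub_ker _ _)).
rewrite sub_capmx capmxSr /=.
apply: submx_trans (capmxSl _ _) _.
apply: submx_trans (cone_cyc (w := w) _); last by move=> s sY _; exact: cY.
by apply: capmxS => //; apply: chS; exact: subsetIr.
Qed.

Lemma I2 (X Y : {set {set T}}) m : dc X -> dc Y -> cone X -> cone Y ->
  \rank (bnd F X m :&: bnd F Y m) = zz (X :&: Y) m.
Proof.
move=> dX dY [w cX] [w' cY]; have /eqmxP e := chI X Y m.
apply/eqmx_rank/andP; split.
  rewrite /cyc sub_capmx e !sub_capmx -!andbA.
  rewrite (submx_trans (capmxSl _ _) (bnd_sub_ch _ dX)).
  rewrite (submx_trans (capmxSr _ _) (bnd_sub_ch _ dY)).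
  by rewrite (submx_trans (capmxSr _ _) (bnd_sub_ker _ _)).
rewrite sub_capmx; apply/andP; split.
  apply: submx_trans (cone_cyc (w := w) _); last by move=> s sX _; exact: cX.
  by apply: capmxS => //; apply: chS; exact: subsetIl.
apply: submx_trans (cone_cyc (w := w') _); last by move=> s sY _; exact: cY.
by apply: capmxS => //; apply: chS; exact: subsetIr.
Qed.

Lemma bz (X : {set {set T}}) n : dc X -> (bb X n <= zz X n)%N.
Proof. by move=> dX; apply: mxrankS; exact: bnd_sub_cyc. Qed.

Lemma part1 (X Y : {set {set T}}) k : dc X -> dc Y -> cone Y ->
  (rbetti F (X :|: Y) k)%:Z =
  (rbetti F X k)%:Z + (Fplus F (X :&: Y) X k)%:Z - (Fminus F (X :&: Y) X k.+1)%:Z.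
Proof.
move=> dX dY cY.
have dU : dc (X :|: Y).
  by move=> s t; rewrite inE => /orP[] sX ts; rewrite inE ?(dX _ _ sX ts) ?(dY _ _ sX ts) ?orbT.
have dI : dc (X :&: Y).
  by move=> s t; rewrite inE => /andP[sX sY] ts; rewrite inE (dX _ _ sX ts) (dY _ _ sY ts).
rewrite /rbetti /Fplus /Fminus.
have h1 := zU X Y k; have h2 := bU X Y k.+1; have h3 := cone_zb k.+1 dY cY.
have h4 := RN (X :&: Y) k; have h5 := I1 k dX dY cY; have h6 := I1 k.+1 dX dY cY.
have h7 := mxrank_sum_cap (cyc F (X :&: Y) k.+1) (bnd F X k.+1).
have i1 := bz k.+1 dU; have i2 := bz k.+1 dX.
have i3 : (bb (X :&: Y) k <= \rank (cyc F (X :&: Y) k :&: bnd F X k))%N.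
  apply: mxrankS; rewrite sub_capmx bnd_sub_cyc //=.
  by apply: submxMr; apply: chS; exact: subsetIl.
have i4 : (bb X k.+1 <= \rank (cyc F (X :&: Y) k.+1 + bnd F X k.+1))%N.
  by apply: mxrankS; exact: addsmxSr.
move: h1 h2 h3 h4 h5 h6 h7 i1 i2 i3 i4; rewrite /zz /bb /cc /=.
lia.
Qed.

Lemma dcU (X Y : {set {set T}}) : dc X -> dc Y -> dc (X :|: Y).
Proof.
by move=> dX dY s t; rewrite inE => /orP[] sX ts; rewrite inE ?(dX _ _ sX ts) ?(dY _ _ sX ts) ?orbT.
Qed.

Lemma dcI (X Y : {set {set T}}) : dc X -> dc Y -> dc (X :&: Y).
Proof.
by move=> dX dY s t; rewrite inE => /andP[sX sY] ts; rewrite inE (dX _ _ sX ts) (dY _ _ sY ts).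
Qed.

Lemma Fsum (I X : {set {set T}}) k : dc I -> I \subset X ->
  (Fplus F I X k + Fminus F I X k = zz I k - bb I k)%N.
Proof.
move=> dI sIX; rewrite /Fplus /Fminus.
have h7 := mxrank_sum_cap (cyc F I k) (bnd F X k).
have i1 := bz k dI.
have i3 : (bb I k <= \rank (cyc F I k :&: bnd F X k))%N.
  apply: mxrankS; rewrite sub_capmx bnd_sub_cyc //=.
  by apply: submxMr; apply: chS.
have i4 : (bb X k <= \rank (cyc F I k + bnd F X k))%N.
  by apply: mxrankS; exact: addsmxSr.
move: h7 i1 i3 i4; rewrite /zz /bb /=; lia.
Qed.

Lemma susp (A B : {set {set T}}) m : dc A -> dc B -> cone A -> cone B ->
  (zz (A :|: B) m.+1 - bb (A :|: B) m.+1 = zz (A :&: B) m - bb (A :&: B) m)%N.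
Proof.
move=> dA dB cA cB.
have h1 := zU A B m; have h2 := bU A B m.+1.
have h3 := cone_zb m.+1 dA cA; have h3' := cone_zb m.+1 dB cB.
have h4 := RN (A :&: B) m; have h5 := I2 m dA dB cA cB; have h6 := I2 m.+1 dA dB cA cB.
have i1 := bz m.+1 (dcU dA dB); have i2 := bz m (dcI dA dB).
move: h1 h2 h3 h3' h4 h5 h6 i1 i2; rewrite /zz /bb /cc /=; lia.
Qed.

Lemma cone0 (I : {set {set T}}) w : [set w] \in I -> (zz I 0 <= bb I 0)%N.
Proof.
move=> wI; apply: mxrankS; apply: (cone_cyc (w := w)) => s sI /eqP.
by rewrite cards_eq0 => /eqP -> _; rewrite setU0.
Qed.

Lemma Fplus0 (I X : {set {set T}}) w : [set w] \in I -> Fplus F I X 0 = 0%N.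
Proof.
move=> wI; rewrite /Fplus; apply/eqP; rewrite subn_eq0.
apply: leq_trans (cone0 wI); apply: mxrankS; exact: capmxSl.
Qed.

Lemma deg0 (Z : {set {set T}}) : dc Z -> set0 \in Z ->
  (zz Z 0 - bb Z 0)%N = nat_of_bool (Z == [set set0]).
Proof.
move=> dZ Z0; case: eqP => [EZ|NZ].
  have C1 : chains F Z 1 = 0.
    apply/matrixP => i j; rewrite !mxE EZ inE.
    by case: (eqVneq (fc i) set0) => [->|]; rewrite ?cards0 ?andbF.
  have Cb : (chains F Z 0 <= kermx bd)%MS.
    apply/sub_kermxP/matrixP => i j; rewrite chainsE dg_mulE bdE [RHS]mxE.
    case: (boolP ((fc i \in Z) && (#|fc i| == 0%N))) => /=; last by rewrite mul0r.
    case/andP => _; rewrite cards_eq0 => /eqP ->; by rewrite /bdf big_set0 mulr0.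
  rewrite /zz /bb /cyc /bnd C1 mul0mx mxrank0 subn0 (eqmx_rank (introT eqmxP (capmx_idPl Cb))).
  pose i0 : 'I_NS := enum_rank (set0 : {set T}).
  have -> : chains F Z 0 = delta_mx i0 i0.
    apply/matrixP => i j; rewrite !mxE.
    have -> : (#|fc i| == 0%N) = (i == i0).
      by rewrite cards_eq0 -fc_eq /fc /i0 enum_rankK.
    case: (eqVneq i i0) => [->|]; rewrite ?andbF ?andbT //.
    have -> : fc i0 = set0 by rewrite /fc /i0 enum_rankK.
    by rewrite Z0 andbT eq_sym.
  by rewrite mxrank_delta.
apply/eqP; rewrite subn_eq0.
have [t tZ t0] : exists2 t, t \in Z & t != set0.
  case: (boolP [exists t in Z, t != set0]) => [/exists_inP //|/exists_inPn H].
  exfalso; apply: NZ; apply/setP => t; rewrite inE; apply/idP/eqP => [tZ|->//].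
  by apply/eqP; move: (H t tZ); rewrite negbK.
case/set0Pn: t0 => x xt.
apply: (@cone0 _ x); apply: dZ tZ _; by rewrite sub1set.
Qed.

End S.

Section Comb.
Variables (T : finType) (adj : rel T) (u v : T).

Lemma cliqueP (a : rel T) (s : {set T}) :
  reflect (forall x y, x \in s -> y \in s -> x != y -> a x y) (s \in clique_complex a).
Proof.
rewrite inE; apply: (iffP forallP) => [H x y xs ys xy|H x].
  by move: (H x); rewrite xs /= => /forallP /(_ y); rewrite ys xy.
by apply/implyP => xs; apply/forallP => y; apply/implyP => ys; apply/implyP; exact: H.
Qed.

Lemma dc_clique (a : rel T) : dc (clique_complex a).
Proof.
move=> s t /cliqueP H ts; apply/cliqueP => x y xt yt; apply: H; exact: (subsetP ts).
Qed.

Local Notation K := (clique_complex adj).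
Local Notation K' := (clique_complex (add_edge adj u v)).
Local Notation e := [set u; v].
Local Notation S := (star K' e).

Lemma KK' : K \subset K'.
Proof.
apply/subsetP => s /cliqueP H; apply/cliqueP => x y xs ys xy.
by rewrite /add_edge H.
Qed.

Lemma K'K t : t \in K' -> ~~ ((u \in t) && (v \in t)) -> t \in K.
Proof.
move=> /cliqueP H uvt; apply/cliqueP => x y xt yt xy.
move: (H x y xt yt xy); rewrite /add_edge.
case/or3P => // /andP[/eqP ex /eqP ey]; subst x y.
  by move: uvt; rewrite xt yt.
by move: uvt; rewrite xt yt.
Qed.

Lemma eK' : u != v -> e \in K'.
Proof.
move=> uv; apply/cliqueP => x y; rewrite !inE /add_edge.
by case/orP => /eqP -> /orP[] /eqP ->; rewrite ?eqxx ?orbT //= eq_sym ?(negbTE uv).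
Qed.

Lemma dcS : dc S.
Proof.
move=> s t; rewrite inE => /exists_inP [r rK /andP[er sr]] ts; rewrite inE.
by apply/exists_inP; exists r => //; rewrite er (subset_trans ts sr).
Qed.

Lemma SK' : S \subset K'.
Proof.
apply/subsetP => t; rewrite inE => /exists_inP [r rK /andP[er tr]].
exact: (dc_clique rK tr).
Qed.

Lemma coneS w t : w \in e -> t \in S -> w |: t \in S.
Proof.
move=> we; rewrite !inE => /exists_inP [r rK /andP[er tr]].
apply/exists_inP; exists r => //; rewrite er /= subUset tr andbT sub1set.
exact: (subsetP er).
Qed.

Lemma EK' : K' = K :|: S.
Proof.
apply/setP => t; rewrite in_setU; apply/idP/idP.
  move=> tK; case: (boolP ((u \in t) && (v \in t))) => [/andP[ut vt]|nuv].
    apply/orP; right; rewrite [t \in S]inE; apply/exists_inP; exists t => //.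
    by rewrite subxx andbT subUset !sub1set ut vt.
  by rewrite (K'K tK nuv).
by case/orP => [/(subsetP KK')|/(subsetP SK')].
Qed.

Lemma uS w : u != v -> w \in e -> [set w] \in S.
Proof.
move=> uv we; rewrite inE; apply/exists_inP; exists e; first exact: eK'.
by rewrite subxx sub1set.
Qed.

Lemma sing_K w : [set w] \in K.
Proof. by apply/cliqueP => x y; rewrite !inE => /eqP -> /eqP ->; rewrite eqxx. Qed.

Lemma S0 : u != v -> set0 \in S.
Proof.
move=> uv; rewrite inE; apply/exists_inP; exists e; first exact: eK'.
by rewrite subxx sub0set.
Qed.

Local Notation L := (K :&: S).
Local Notation A := [set t in K :&: S | v \notin t].
Local Notation B := [set t in K :&: S | u \notin t].

Lemma disj_e (t : {set T}) : [disjoint e & t] = (u \notin t) && (v \notin t).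
Proof. by rewrite disjoints_subset subUset !sub1set !inE. Qed.

Lemma EL : u != v -> ~~ adj u v -> L = A :|: B.
Proof.
move=> uv nadj; apply/setP => t; rewrite in_setU [t \in A]in_set [t \in B]in_set.
case: (boolP (t \in L)) => //= tL.
case: (boolP (v \in t)) => //= vt; case: (boolP (u \in t)) => //= ut.
case/setIP: tL => /cliqueP H _; by move: (H u v ut vt uv); rewrite (negbTE nadj).
Qed.

Lemma Elk : link K' e = A :&: B.
Proof.
apply/setP => t; rewrite in_setI [t \in A]in_set [t \in B]in_set [t \in link _ _]in_set disj_e in_setI.
case: (boolP (t \in S)) => tS; rewrite ?andbF //=.
case: (boolP (u \in t)) => ut; case: (boolP (v \in t)) => vt; rewrite ?andbF ?andbT //=.
rewrite (K'K (subsetP SK' _ tS)) //= ?(negbTE ut) ?(negbTE vt) //.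
Qed.

Lemma dcL : dc L.
Proof. have h1 : dc K := @dc_clique adj. have h2 : dc S := @dcS. exact: dcI h1 h2. Qed.

Lemma memW (w : T) (t : {set T}) : (t \in [set t in L | w \notin t]) = (t \in L) && (w \notin t).
Proof. by rewrite in_set. Qed.

Lemma dcA (w : T) : dc [set t in L | w \notin t].
Proof.
move=> s t; rewrite !memW => /andP[sL ws] ts; rewrite (dcL sL ts) /=.
by apply: contra ws; exact: (subsetP ts).
Qed.

Lemma coneA w w' : u != v -> w \in e -> w' \in e -> w != w' ->
  cone [set t in L | w' \notin t].
Proof.
move=> uv we w'e ww'; exists w => t; rewrite !memW in_setI => /andP[/andP[tK tS] w't] wt.
have hw' : w' \in w |: t = false by rewrite in_setU1 eq_sym (negbTE ww') (negbTE w't).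
rewrite hw' andbT in_setI coneS // andbT.
apply: K'K; first by apply: (subsetP SK'); exact: coneS.
by case/setU1P: w'e => [E|/set1P E]; rewrite -E hw' ?andbF.
Qed.

End Comb.

Unset Implicit Arguments.

Theorem lemma6p1 (F : fieldType) (T : finType) (adj : rel T) (u v : T) :
  symmetric adj -> irreflexive adj -> u != v -> ~~ adj u v ->
  let K := clique_complex adj in
  let K' := clique_complex (add_edge adj u v) in
  let e := [set u; v] in
  let L := K :&: star K' e in
  (forall k : nat, (0 < k)%N ->
     (rbetti F K' k)%:Z
     = (rbetti F K k)%:Z + (Fplus F L K k)%:Z - (Fminus F L K k.+1)%:Z)
  /\ (rbetti F K' 0)%:Z = (rbetti F K 0)%:Z - (Fminus F L K 1)%:Z
  /\ (forall k : nat, (1 < k)%N ->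
        (Fplus F L K k + Fminus F L K k)%N = rbetti F (link K' e) k.-2)
  /\ (Fplus F L K 1 + Fminus F L K 1)%N = nat_of_bool (link K' e == [set set0]).
Proof.
move=> sy ir uv nadj; cbv zeta.
have dK : dc (clique_complex adj) := @dc_clique T adj.
have dS : dc (star (clique_complex (add_edge adj u v)) [set u; v]) := @dcS T adj u v.
have cS : cone (star (clique_complex (add_edge adj u v)) [set u; v]).
  exists u => t tS _; apply: coneS => //; exact: setU11.
have uL : [set u] \in clique_complex adj :&: star (clique_complex (add_edge adj u v)) [set u; v].
  by rewrite in_setI sing_K uS // setU11.
have dL := @dcL T adj u v.
have sLK : clique_complex adj :&: star (clique_complex (add_edge adj u v)) [set u; v]
   \subset clique_complex adj by exact: subsetIl.
have cA := @coneA T adj u v u v uv (setU11 _ _) (setU1r _ (set11 _)) uv.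
have cB := @coneA T adj u v v u uv (setU1r _ (set11 _)) (setU11 _ _) (ltac:(by rewrite eq_sym)).
split.
  move=> k _; rewrite {1}(@EK' T adj u v); exact: part1.
split.
  rewrite {1}(@EK' T adj u v) (part1 F 0 dK dS cS) (Fplus0 F _ uL).
  by rewrite addr0.
split.
  case=> [//|[//|m]] _; rewrite (Fsum _ _ dL sLK) (@EL T adj u v uv nadj) (@Elk T adj u v).
  exact: susp (@dcA T adj u v v) (@dcA T adj u v u) cA cB.
rewrite (Fsum _ _ dL sLK) (@EL T adj u v uv nadj).
rewrite (susp F 0 (@dcA T adj u v v) (@dcA T adj u v u) cA cB) -(@Elk T adj u v).
apply: deg0.
  rewrite (@Elk T adj u v); exact: dcI (@dcA T adj u v v) (@dcA T adj u v u).
by rewrite in_set S0 // disj_e !inE.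
Qed.
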